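(* For the $N$-relay 1-2-1 diamond network (context) with relays operating all in FD or all in HD, $\mathsf{C}_{\rm cs,iid}$ (computed with the state set of that mode) equals the optimal value of the linear program $$\mathrm{P1^d}:\ \max\sum_{p=1}^N x_p\mathsf C_p\ \text{ s.t. }\ 0\le x_p\le1\ \forall p\in[1:N];\quad \sum_{p=1}^N x_p\frac{\mathsf C_p}{\ell_{p,0}}\le1;\quad \sum_{p=1}^N x_p\frac{\mathsf C_p}{\ell_{N+1,p}}\le1,$$ where $\mathsf C_p=\min\{\ell_{p,0},\ell_{N+1,p}\}$ in the FD case and $\mathsf C_p=\frac{\ell_{p,0}\ell_{N+1,p}}{\ell_{p,0}+\ell_{N+1,p}}$ in the HD case.
   Context: Diamond network: nodes $[0:N+1]$, source $0$, destination $N+1$, relays $[1:N]$; the only links are $(0,p)$ and $(p,N+1)$ for $p\in[1:N]$, with positive rational capacities $\ell_{p,0}$ and $\ell_{N+1,p}$; all other $\ell_{j,i}=0$. Network states: a state $s$ consists of sets $s_{i,t}\subseteq[1:N+1]\setminus\{i\}$ and $s_{i,r}\subseteq[0:N]\setminus\{i\}$, each of cardinality at most $1$, for $i\in[0:N+1]$, with $s_{0,r}=s_{N+1,t}=\emptyset$; in FD mode there is no further constraint; in HD mode additionally $|s_{i,t}|+|s_{i,r}|\le1$ for $i\in[1:N]$. $\mathcal S$ is the set of all states of the mode. Link $(i,j)$ is active in $s$ if $j\in s_{i,t}$ and $i\in s_{j,r}$. $\mathsf{C}_{\rm cs,iid}=\max_{\lambda}\min_{\Omega}\sum_{i\in\Omega,\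 j\in\Omega^c}\big(\sum_{s\in\mathcal S:\ (i,j)\text{ active in }s}\lambda_s\big)\ell_{j,i}$, maximum over probability vectors $(\lambda_s)_{s\in\mathcal S}$, minimum over $\Omega$ with $0\in\Omega\subseteq[0:N]$, $\Omega^c=[0:N+1]\setminus\Omega$. *)

(* Defs.v *)
From HB Require Import structures.
From mathcomp Require Import all_boot all_order all_algebra.
Set Implicit Arguments. Unset Strict Implicit. Unset Printing Implicit Defensive.
Import Order.TTheory GRing.Theory Num.Theory.
Local Open Scope ring_scope.

Definition node (N : nat) := 'I_(N.+2).
Definition src {N : nat} : node N := ord0.
Definition dst {N : nat} : node N := ord_max.
(* relay p (p : 'I_N, i.e. p in [0:N-1]) is node p+1 in [1:N] *)
Definition relay {N : nat} (p : 'I_N) : node N := inord p.+1.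
Definition is_relay {N : nat} (i : node N) : bool := (0 < i)%N && (i <= N)%N.

Inductive mode := FD | HD.
Definition mode_eqb (m1 m2 : mode) : bool :=
  match m1, m2 with FD, FD | HD, HD => true | _, _ => false end.

(* A state assigns to each node i a pair (s_{i,t}, s_{i,r}) of sets of
   cardinality at most 1, represented as options. *)
Definition state (N : nat) := {ffun node N -> option (node N) * option (node N)}.

Definition valid_state {N : nat} (m : mode) (s : state N) : bool :=
  [forall i : node N,
    [&& (if (s i).1 is Some j then (j != src) && (j != i) else true),
        (if (s i).2 is Some j then (j != dst) && (j != i) else true),
        (i == src) ==> ((s i).2 == None),
        (i == dst) ==> ((s i).1 == None) &
        (mode_eqb m HD && is_relay i) ==>
           ~~ (((s i).1 != None) && ((s i).2 != None))]].

Definition active {N : nat} (s : state N) (i j : node N) : bool :=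
  ((s i).1 == Some j) && ((s j).2 == Some i).

(* ell j i = capacity of link i -> j: ell_{p,0} = a p, ell_{N+1,p} = b p, else 0 *)
Definition ell {R : ringType} {N : nat} (a b : 'I_N -> R) (j i : node N) : R :=
  \sum_(p < N) (((i == src) && (j == relay p))%:R * a p
               + ((i == relay p) && (j == dst))%:R * b p).

Definition cut_value {R : ringType} {N : nat} (m : mode) (a b : 'I_N -> R)
    (lam : state N -> R) (Om : {set node N}) : R :=
  \sum_(i in Om) \sum_(j in ~: Om)
     (\sum_(s : state N | valid_state m s && active s i j) lam s) * ell a b j i.

Definition admissible_cut {N : nat} (Om : {set node N}) : bool :=
  (src \in Om) && (dst \notin Om).

Definition prob_vector {R : numDomainType} {N : nat} (m : mode)
    (lam : state N -> R) : Prop :=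
  (forall s, valid_state m s -> 0 <= lam s) /\
  \sum_(s : state N | valid_state m s) lam s = 1.

Definition is_mincut {R : numDomainType} {N : nat} (m : mode) (a b : 'I_N -> R)
    (lam : state N -> R) (w : R) : Prop :=
  (exists2 Om, admissible_cut Om & cut_value m a b lam Om = w) /\
  (forall Om, admissible_cut Om -> w <= cut_value m a b lam Om).

Definition is_C_cs_iid {R : numDomainType} {N : nat} (m : mode) (a b : 'I_N -> R)
    (v : R) : Prop :=
  (exists lam, prob_vector m lam /\ is_mincut m a b lam v) /\
  (forall lam w, prob_vector m lam -> is_mincut m a b lam w -> w <= v).

Definition Cp {R : numFieldType} {N : nat} (m : mode) (a b : 'I_N -> R) (p : 'I_N) : R :=
  match m with
  | FD => Num.min (a p) (b p)
  | HD => a p * b p / (a p + b p)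
  end.

Definition lp_feasible {R : numFieldType} {N : nat} (m : mode) (a b : 'I_N -> R)
    (x : 'I_N -> R) : Prop :=
  (forall p, 0 <= x p <= 1) /\
  \sum_(p < N) x p * (Cp m a b p / a p) <= 1 /\
  \sum_(p < N) x p * (Cp m a b p / b p) <= 1.

Definition lp_objective {R : numFieldType} {N : nat} (m : mode) (a b : 'I_N -> R)
    (x : 'I_N -> R) : R := \sum_(p < N) x p * Cp m a b p.

Definition is_P1d_opt {R : numFieldType} {N : nat} (m : mode) (a b : 'I_N -> R)
    (v : R) : Prop :=
  (exists x, lp_feasible m a b x /\ lp_objective m a b x = v) /\
  (forall x, lp_feasible m a b x -> lp_objective m a b x <= v).

(* Main.v *)
Require Import Defs.
From HB Require Import structures.
From mathcomp Require Import all_boot all_order all_algebra.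
From mathcomp Require Import ring lra.
Import Order.TTheory GRing.Theory Num.Theory.
Set Implicit Arguments. Unset Strict Implicit. Unset Printing Implicit Defensive.
Local Open Scope ring_scope.

Lemma sum_opt (R : nmodType) (T : finType) (F : option T -> R) :
  \sum_(o : option T) F o = F None + \sum_(x : T) F (Some x).
Proof.
rewrite -big_enum (perm_big (None :: map Some (enum T))) /=.
  by rewrite big_cons big_map big_enum.
apply: uniq_perm; first exact: enum_uniq.
  rewrite /= map_inj_uniq ?enum_uniq ?andbT; last by move=> x y [].
  by apply/mapP=> -[].
by case=> [x|]; rewrite mem_enum inE //= (mem_map (fun x y (h : Some x = Some y) => ltac:(by case: h))) mem_enum.
Qed.

Lemma sum_ind (R : ringType) (T : finType) (A : {pred T}) (x : T) (G : T -> R) :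
  \sum_(i in A) (i == x)%:R * G i = (x \in A)%:R * G x.
Proof.
case xA: (x \in A).
  rewrite (bigD1 x) //= eqxx mul1r big1 ?addr0 ?mul1r // => i /andP[_ /negbTE->].
  by rewrite mul0r.
rewrite big1 ?mul0r // => i iA; case: eqP => [e|]; last by rewrite mul0r.
by move: iA; rewrite e xA.
Qed.

Definition fmax (R : realDomainType) (T : Type) (f : T -> R) x0 (l : seq T) :=
  foldr (fun a acc => Num.max (f a) acc) x0 l.
Definition fmin (R : realDomainType) (T : Type) (f : T -> R) x0 (l : seq T) :=
  foldr (fun a acc => Num.min (f a) acc) x0 l.

Lemma fmax_ge0 (R : realDomainType) (T : eqType) (f : T -> R) x0 l : x0 <= fmax f x0 l.
Proof. by elim: l => //= a l IH; rewrite le_max IH orbT. Qed.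
Lemma fmax_ge (R : realDomainType) (T : eqType) (f : T -> R) x0 l a :
  a \in l -> f a <= fmax f x0 l.
Proof.
elim: l => //= b l IH; rewrite inE => /orP[/eqP->|/IH h]; rewrite le_max ?lexx //.
by rewrite h orbT.
Qed.
Lemma fmax_le (R : realDomainType) (T : eqType) (f : T -> R) x0 l B :
  x0 <= B -> (forall a, a \in l -> f a <= B) -> fmax f x0 l <= B.
Proof.
move=> h0; elim: l => //= a l IH h; rewrite ge_max h ?mem_head ?IH //.
by move=> b bl; apply: h; rewrite inE bl orbT.
Qed.
Lemma fmin_le0 (R : realDomainType) (T : eqType) (f : T -> R) x0 l : fmin f x0 l <= x0.
Proof. by elim: l => //= a l IH; rewrite ge_min IH orbT. Qed.
Lemma fmin_le (R : realDomainType) (T : eqType) (f : T -> R) x0 l a :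
  a \in l -> fmin f x0 l <= f a.
Proof.
elim: l => //= b l IH; rewrite inE => /orP[/eqP->|/IH h]; rewrite ge_min ?lexx //.
by rewrite h orbT.
Qed.
Lemma fmin_ge (R : realDomainType) (T : eqType) (f : T -> R) x0 l B :
  B <= x0 -> (forall a, a \in l -> B <= f a) -> B <= fmin f x0 l.
Proof.
move=> h0; elim: l => //= a l IH h; rewrite le_min h ?mem_head ?IH //.
by move=> b bl; apply: h; rewrite inE bl orbT.
Qed.

Definition cstr (R : realFieldType) n := ({ffun 'I_n -> R} * R)%type.
Definition dot (R : realFieldType) n (c : {ffun 'I_n -> R}) (z : 'I_n -> R) :=
  \sum_i c i * z i.
Definition sat (R : realFieldType) n (L : seq (cstr R n)) (z : 'I_n -> R) :=
  all (fun cd => dot cd.1 z <= cd.2) L.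
Definition restr (R : realFieldType) n (z : 'I_n.+1 -> R) : 'I_n -> R :=
  fun i => z (widen_ord (leqnSn n) i).
Definition restrf (R : realFieldType) n (c : {ffun 'I_n.+1 -> R}) : {ffun 'I_n -> R} :=
  [ffun i => c (widen_ord (leqnSn n) i)].
Definition ext (R : realFieldType) n (z : 'I_n -> R) (s : R) : 'I_n.+1 -> R :=
  fun i => if insub (val i) is Some j then z j else s.

Lemma dot_split (R : realFieldType) n (c : {ffun 'I_n.+1 -> R}) z :
  dot c z = dot (restrf c) (restr z) + c ord_max * z ord_max.
Proof. by rewrite /dot big_ord_recr /=; congr (_ + _); apply: eq_bigr => i _; rewrite ffunE. Qed.

Lemma ext_widen (R : realFieldType) n (z : 'I_n -> R) s i :
  ext z s (widen_ord (leqnSn n) i) = z i.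
Proof. by rewrite /ext /= valK. Qed.
Lemma ext_max (R : realFieldType) n (z : 'I_n -> R) s : ext z s ord_max = s.
Proof. by rewrite /ext /= insubN ?ltnn. Qed.

Lemma dot_ext (R : realFieldType) n (c : {ffun 'I_n.+1 -> R}) z s :
  dot c (ext z s) = dot (restrf c) z + c ord_max * s.
Proof.
rewrite dot_split ext_max; congr (_ + _); apply: eq_bigr => i _.
by rewrite /restr ext_widen.
Qed.

Definition cm (R : realFieldType) n (cd : cstr R n.+1) := cd.1 ord_max.
Definition comb (R : realFieldType) n (p q : cstr R n.+1) : cstr R n :=
  ([ffun i => - cm q * p.1 (widen_ord (leqnSn n) i) + cm p * q.1 (widen_ord (leqnSn n) i)],
   - cm q * p.2 + cm p * q.2).
Definition fm (R : realFieldType) n (L : seq (cstr R n.+1)) : seq (cstr R n) :=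
  [seq (restrf cd.1, cd.2) | cd <- L & cm cd == 0] ++
  [seq comb p q | p <- [seq cd <- L | 0 < cm cd], q <- [seq cd <- L | cm cd < 0]].

Lemma dot_comb (R : realFieldType) n (p q : cstr R n.+1) z :
  dot (comb p q).1 z = - cm q * dot (restrf p.1) z + cm p * dot (restrf q.1) z.
Proof.
rewrite /dot !mulr_sumr -big_split /=; apply: eq_bigr => i _.
by rewrite !ffunE; ring.
Qed.

Lemma fm_sound (R : realFieldType) n (L : seq (cstr R n.+1)) z :
  sat L z -> sat (fm L) (restr z).
Proof.
move=> /allP H; apply/allP => cd; rewrite mem_cat => /orP[].
  case/mapP => c; rewrite mem_filter => /andP[/eqP c0 cL] -> /=.
  by have := H _ cL; rewrite dot_split /cm in c0 *; rewrite c0 mul0r addr0.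
case/allpairsP => [[p q]] /=; rewrite !mem_filter => -[/andP[pp pL] /andP[qn qL] ->].
rewrite dot_comb /=.
have := H _ pL; have := H _ qL; rewrite !dot_split.
move: pp qn; rewrite /cm; set cp := p.1 ord_max; set cq := q.1 ord_max.
set dp := dot (restrf p.1) _; set dq := dot (restrf q.1) _ => pp qn h1 h2.
nra.
Qed.

Lemma comb_bound (R : realFieldType) n (p q : cstr R n.+1) z :
  0 < cm p -> cm q < 0 -> dot (comb p q).1 z <= (comb p q).2 ->
  (q.2 - dot (restrf q.1) z) / cm q <= (p.2 - dot (restrf p.1) z) / cm p.
Proof.
rewrite dot_comb /= => pp qn h.
set X := (p.2 - _) / _.
have hX : p.2 - dot (restrf p.1) z = X * cm p by rewrite divfK // gt_eqF.
rewrite ler_ndivrMr //.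
move: hX h; set rp := p.2 - _; set rq := q.2 - _ => hX h.
have e1 : rp = p.2 - dot (restrf p.1) z by [].
have e2 : rq = q.2 - dot (restrf q.1) z by [].
nra.
Qed.

Lemma fm_complete (R : realFieldType) n (L : seq (cstr R n.+1)) z :
  sat (fm L) z -> exists s, sat L (ext z s).
Proof.
move=> /allP H.
pose U (cd : cstr R n.+1) := (cd.2 - dot (restrf cd.1) z) / cm cd.
pose Pos := [seq cd <- L | 0 < cm cd]; pose Neg := [seq cd <- L | cm cd < 0].
pose mU := fmin U 0 Pos.
exists (fmax U mU Neg); apply/allP => cd cdL; rewrite dot_ext.
have hcm : cd.1 ord_max = cm cd by [].
case: (ltrgt0P (cm cd)) => hc.
- have : fmax U mU Neg <= U cd.
    apply: fmax_le; first by apply: fmin_le; rewrite mem_filter hc.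
    move=> q; rewrite mem_filter => /andP[qn qL]; apply: comb_bound => //.
    apply: H; rewrite mem_cat; apply/orP; right; apply/allpairsP.
    by exists (cd, q); rewrite /= !mem_filter hc qn cdL qL.
  rewrite /U ler_pdivlMr // hcm; lra.
- have : U cd <= fmax U mU Neg by apply: fmax_ge; rewrite mem_filter hc.
  rewrite /U ler_ndivrMr // hcm; lra.
- have := H (restrf cd.1, cd.2); rewrite mem_cat map_f ?mem_filter ?cdL ?hc ?eqxx //=.
  by rewrite hcm hc mul0r addr0 => ->.
Qed.

Definition sat1 (R : realFieldType) (L : seq (cstr R 1)) (t : R) :=
  all (fun cd : cstr R 1 => cd.1 ord0 * t <= cd.2) L.

Lemma elim_all (R : realFieldType) k (L : seq (cstr R k.+1)) :
  exists L1 : seq (cstr R 1), forall t,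
  (exists z : 'I_k.+1 -> R, z ord0 = t /\ sat L z) <-> sat1 L1 t.
Proof.
elim: k L => [|k IH] L.
  exists L => t; split.
    case=> z [<- /allP h]; apply/allP => cd /h; by rewrite /dot big_ord1.
  move=> /allP h; exists (fun _ => t); split => //; apply/allP => cd /h.
  by rewrite /dot big_ord1.
have [L1 HL1] := IH (fm L); exists L1 => t; rewrite -HL1; split.
  case=> z [<- hz]; exists (restr z); split; last exact: fm_sound.
  by rewrite /restr; congr z; apply: val_inj.
case=> z' [<- hz]; have [s hs] := fm_complete hz; exists (ext z' s); split => //.
have -> : (ord0 : 'I_k.+2) = widen_ord (leqnSn _) ord0 by apply: val_inj.
by rewrite ext_widen.
Qed.

Lemma sum_ind1 (R : ringType) (T : finType) (x : T) (G : T -> R) :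
  \sum_i (i == x)%:R * G i = G x.
Proof.
rewrite (bigD1 x) //= eqxx mul1r big1 ?addr0 // => i /negbTE->.
by rewrite mul0r.
Qed.

Definition vec (R : realFieldType) N (c0 : R) (c : 'I_N -> R) : {ffun 'I_N.+1 -> R} :=
  [ffun i => if unlift ord0 i is Some p then c p else c0].

Lemma dot_vec (R : realFieldType) N c0 (c : 'I_N -> R) z :
  dot (vec c0 c) z = c0 * z ord0 + \sum_p c p * z (lift ord0 p).
Proof.
rewrite /dot big_ord_recl !ffunE unlift_none; congr (_ + _).
by apply: eq_bigr => i _; rewrite ffunE liftK.
Qed.

Definition feasG (R : realFieldType) N (u w : 'I_N -> R) (x : 'I_N -> R) : Prop :=
  (forall p, 0 <= x p <= 1) /\
  \sum_(p < N) x p * u p <= 1 /\ \sum_(p < N) x p * w p <= 1.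
Definition objG (R : realFieldType) N (c : 'I_N -> R) (x : 'I_N -> R) : R :=
  \sum_(p < N) x p * c p.

Definition L0 (R : realFieldType) N (c u w : 'I_N -> R) : seq (cstr R N.+1) :=
  [seq (vec 0 (fun q => - (q == p)%:R), 0) | p <- enum 'I_N] ++
  [seq (vec 0 (fun q => (q == p)%:R), 1) | p <- enum 'I_N] ++
  [:: (vec 0 u, 1); (vec 0 w, 1); (vec 1 (fun q => - c q), 0)].

Lemma satL0 (R : realFieldType) N (c u w : 'I_N -> R) z x :
  (forall p, z (lift ord0 p) = x p) ->
  (sat (L0 c u w) z <-> feasG u w x /\ z ord0 <= objG c x).
Proof.
move=> hz.
have e1 p : dot (vec 0 (fun q => - (q == p)%:R)) z = - x p.
  rewrite dot_vec mul0r add0r -(sum_ind1 p (fun q => x q)) -sumrN.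
  by apply: eq_bigr => i _; rewrite hz mulNr.
have e2 p : dot (vec 0 (fun q => (q == p)%:R)) z = x p.
  rewrite dot_vec mul0r add0r -(sum_ind1 p (fun q => x q)).
  by apply: eq_bigr => i _; rewrite hz.
have e3 (v : 'I_N -> R) : dot (vec 0 v) z = \sum_p x p * v p.
  by rewrite dot_vec mul0r add0r; apply: eq_bigr => i _; rewrite hz mulrC.
have e4 : dot (vec 1 (fun q => - c q)) z = z ord0 - objG c x.
  rewrite dot_vec mul1r /objG -sumrN; congr (_ + _).
  by apply: eq_bigr => i _; rewrite hz mulNr mulrC.
rewrite /sat !all_cat /= !andbT !e3 e4; split.
  case/and5P => /allP h1 /allP h2 hu hw ho; split; last by lra.
  split=> // p; apply/andP; split.
    by have := h1 _ (map_f _ (mem_enum _ p)); rewrite /= e1 oppr_le0.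
  by have := h2 _ (map_f _ (mem_enum _ p)); rewrite /= e2.
case=> -[hx [hu hw]] ho; apply/and5P; split => //; last by lra.
  by apply/allP => cd /mapP[p _ ->] /=; rewrite e1 oppr_le0; case/andP: (hx p).
by apply/allP => cd /mapP[p _ ->] /=; rewrite e2; case/andP: (hx p).
Qed.

Definition zz (R : realFieldType) N (t : R) (x : 'I_N -> R) : 'I_N.+1 -> R :=
  fun i => if unlift ord0 i is Some p then x p else t.

Lemma lp_max (R : realFieldType) N (c u w : 'I_N -> R) :
  (forall p, 0 <= c p) ->
  exists v, (exists x, feasG u w x /\ objG c x = v) /\
            (forall x, feasG u w x -> objG c x <= v).
Proof.
move=> c0.
have [L1 H1] := elim_all (L0 c u w).
have zzl (t : R) (x : 'I_N -> R) (p : 'I_N) : zz t x (lift ord0 p) = x p by rewrite /zz liftK.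
have zz0 (t : R) (x : 'I_N -> R) : zz t x ord0 = t by rewrite /zz unlift_none.
pose Bd := \sum_p c p.
have Bd0 : 0 <= Bd by apply: sumr_ge0.
have objB x : feasG u w x -> objG c x <= Bd.
  case=> hx _; apply: ler_sum => p _; case/andP: (hx p) => h0 h1.
  by rewrite ler_piMl.
have inT x : feasG u w x -> sat1 L1 (objG c x).
  move=> fx; apply/H1; exists (zz (objG c x) x); rewrite zz0; split=> //.
  by apply (proj2 (satL0 c u w (zzl (objG c x) x))); split => //; rewrite zz0.
have bdT t : sat1 L1 t -> t <= Bd.
  move/H1 => [z [<- /(satL0 c u w (fun p => erefl))]] [fx ho].
  exact: le_trans ho (objB _ fx).
have f0 : feasG u w (fun _ => 0).
  by split; [move=> p; rewrite lexx ler01 | split; rewrite big1 ?ler01 // => p _; rewrite mul0r].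
have o0 : objG c (fun _ => 0) = 0 by rewrite /objG big1 // => p _; rewrite mul0r.
have T0 := inT _ f0; rewrite o0 in T0.
have d0 cd : cd \in L1 -> 0 <= cd.2.
  by move/allP: T0 => h /h; rewrite mulr0.
pose ts := fmin (fun cd : cstr R 1 => cd.2 / cd.1 ord0) Bd (filter (fun cd : cstr R 1 => 0 < cd.1 ord0) L1).
have ts0 : 0 <= ts.
  apply: fmin_ge => // cd; rewrite mem_filter => /andP[hc /d0 hd].
  by rewrite divr_ge0 // ltW.
have tsT : sat1 L1 ts.
  apply/allP => cd cdL /=; case: (ltrP 0 (cd.1 ord0)) => hc.
    have : ts <= cd.2 / cd.1 ord0 by apply: fmin_le; rewrite mem_filter hc.
    by rewrite ler_pdivlMr // mulrC.
  apply: le_trans (d0 _ cdL); by rewrite mulr_le0_ge0.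
have tsM t : sat1 L1 t -> t <= ts.
  move=> hT; apply: fmin_ge; first exact: bdT.
  move=> cd; rewrite mem_filter => /andP[hc cdL].
  by rewrite ler_pdivlMr // mulrC; move/allP: hT => /(_ _ cdL).
exists ts; split; last by move=> x /inT /tsM.
move/H1: tsT => [z [zt /(satL0 c u w (fun p => erefl))]] [fx ho].
exists (fun p => z (lift ord0 p)); split => //.
by apply/eqP; rewrite eq_le tsM ?inT // -zt ho.
Qed.

Lemma relay_val N (p : 'I_N) : val (relay p) = p.+1.
Proof. by rewrite /relay /= inordK // !ltnS ltnW. Qed.
Lemma relay_src N (p : 'I_N) : (relay p == src) = false.
Proof. by apply/negbTE; apply/eqP => /(congr1 val); rewrite relay_val. Qed.
Lemma relay_dst N (p : 'I_N) : (relay p == dst) = false.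
Proof.
apply/negbTE; apply/eqP => /(congr1 val); rewrite relay_val /= => -[e].
by move: (ltn_ord p); rewrite e ltnn.
Qed.
Lemma src_dst N : ((src : node N) == dst) = false.
Proof. by []. Qed.
Lemma dst_src N : ((dst : node N) == src) = false.
Proof. by []. Qed.
Lemma relay_inj N : injective (@relay N).
Proof. by move=> p q /(congr1 val); rewrite !relay_val => -[/val_inj]. Qed.
Lemma relay_eq N (p q : 'I_N) : (relay p == relay q) = (p == q).
Proof. by apply/eqP/eqP => [/relay_inj|->]. Qed.
Lemma is_relay_relay N (p : 'I_N) : is_relay (relay p).
Proof. by rewrite /is_relay relay_val ltn_ord. Qed.

Definition alph (R : realFieldType) N m (lam : state N -> R) (p : 'I_N) :=
  \sum_(s : state N | valid_state m s && active s src (relay p)) lam s.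
Definition bet (R : realFieldType) N m (lam : state N -> R) (p : 'I_N) :=
  \sum_(s : state N | valid_state m s && active s (relay p) dst) lam s.

Lemma cut_formula (R : realFieldType) N m (a b : 'I_N -> R) (lam : state N -> R) Om :
  admissible_cut Om ->
  cut_value m a b lam Om =
  \sum_p (if relay p \in Om then bet m lam p * b p else alph m lam p * a p).
Proof.
case/andP => sO dO.
rewrite /cut_value.
set F := fun i j : node N => \sum_(s : state N | valid_state m s && active s i j) lam s.
have E i j : (\sum_(s : state N | valid_state m s && active s i j) lam s) * ell a b j i =
    \sum_p ((i == src)%:R * ((j == relay p)%:R * (F i j * a p)) +
            (i == relay p)%:R * ((j == dst)%:R * (F i j * b p))).
  rewrite /ell mulr_sumr; apply: eq_bigr => p _.
  by case: (i == src); case: (j == relay p); case: (i == relay p); case: (j == dst);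
    rewrite /= ?mul0r ?mul1r ?mulr0 ?mulr1 ?add0r ?addr0 ?mulrDr ?mulr0.
under eq_bigr do under eq_bigr do rewrite E.
under eq_bigr do rewrite exchange_big.
rewrite exchange_big; apply: eq_bigr => p _.
under eq_bigr do rewrite big_split /= -!mulr_sumr !sum_ind.
rewrite big_split /=.
have -> : \sum_(i in Om) (i == src)%:R * ((relay p \in ~: Om)%:R * (F i (relay p) * a p)) =
          (relay p \notin Om)%:R * (F src (relay p) * a p).
  by rewrite sum_ind sO mul1r in_setC.
have -> : \sum_(i in Om) (i == relay p)%:R * ((dst \in ~: Om)%:R * (F i dst * b p)) =
          (relay p \in Om)%:R * (F (relay p) dst * b p).
  by rewrite sum_ind in_setC dO mul1r.
by case: (relay p \in Om); rewrite /= ?mul0r ?mul1r ?addr0 ?add0r.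
Qed.

Definition mc (R : realFieldType) N m (a b : 'I_N -> R) (lam : state N -> R) :=
  \sum_p Num.min (alph m lam p * a p) (bet m lam p * b p).

Lemma mincut_char (R : realFieldType) N m (a b : 'I_N -> R) (lam : state N -> R) :
  is_mincut m a b lam (mc m a b lam) /\
  (forall w, is_mincut m a b lam w -> w <= mc m a b lam).
Proof.
pose Os := [set i : node N | (i == src) ||
   [exists p, (i == relay p) && (bet m lam p * b p <= alph m lam p * a p)]].
have adm : admissible_cut Os.
  rewrite /admissible_cut !inE eqxx /=; apply/negP => /existsP[p].
  by rewrite eq_sym relay_dst.
have memOs p : (relay p \in Os) = (bet m lam p * b p <= alph m lam p * a p).
  rewrite inE relay_src /=; apply/existsP/idP => [[q /andP[/eqP/relay_inj-> //]]|h].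
  by exists p; rewrite eqxx.
have cOs : cut_value m a b lam Os = mc m a b lam.
  rewrite cut_formula //; apply: eq_bigr => p _; rewrite memOs.
  case: ifP => h; first by rewrite min_r.
  by rewrite min_l // ltW // ltNge h.
have lb Om : admissible_cut Om -> mc m a b lam <= cut_value m a b lam Om.
  move=> hO; rewrite cut_formula //; apply: ler_sum => p _.
  by case: (relay p \in Om); rewrite ge_min lexx ?orbT.
split; first by split; [exists Os | ].
by move=> w [_ h]; rewrite -cOs; apply: h.
Qed.

Lemma sum_uniq1 (R : realFieldType) (I : finType) (f : I -> bool) :
  (forall p q, f p -> f q -> p = q) -> \sum_p (f p)%:R <= 1 :> R.
Proof.
move=> hu; case: (pickP f) => [p0 hp0|h0].
  rewrite (bigD1 p0) //= hp0 big1 ?addr0 // => q nq.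
  by case fq: (f q) => //; move: nq; rewrite (hu _ _ fq hp0) eqxx.
by rewrite big1 ?ler01 // => p _; rewrite h0.
Qed.

Lemma sum_fam (R : realFieldType) N m (lam : state N -> R) (I : finType)
    (f : I -> state N -> bool) :
  prob_vector m lam -> (forall s, valid_state m s -> forall p q, f p s -> f q s -> p = q) ->
  \sum_p \sum_(s | valid_state m s && f p s) lam s <= 1.
Proof.
case=> h0 h1 hu.
under eq_bigr do rewrite big_mkcondr /=.
rewrite exchange_big /= -[X in _ <= X]h1; apply: ler_sum => s vs.
have -> : \sum_p (if f p s then lam s else 0) = (\sum_p (f p s)%:R) * lam s.
  by rewrite mulr_suml; apply: eq_bigr => p _; case: (f p s); rewrite ?mul1r ?mul0r.
by rewrite ler_piMl ?h0 // sum_uniq1 // => p q; apply: hu.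
Qed.

Lemma alph_ge0 (R : realFieldType) N m (lam : state N -> R) p :
  prob_vector m lam -> 0 <= alph m lam p.
Proof. by case=> h0 _; apply: sumr_ge0 => s /andP[vs _]; apply: h0. Qed.
Lemma bet_ge0 (R : realFieldType) N m (lam : state N -> R) p :
  prob_vector m lam -> 0 <= bet m lam p.
Proof. by case=> h0 _; apply: sumr_ge0 => s /andP[vs _]; apply: h0. Qed.

Lemma sum_alph (R : realFieldType) N m (lam : state N -> R) :
  prob_vector m lam -> \sum_p alph m lam p <= 1.
Proof.
move=> hp; apply: (sum_fam (f := fun p s => active s src (relay p))) => // s _ p q.
by case/andP => /eqP e1 _ /andP[/eqP e2 _]; move: e2; rewrite e1 => -[/relay_inj].
Qed.
Lemma sum_bet (R : realFieldType) N m (lam : state N -> R) :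
  prob_vector m lam -> \sum_p bet m lam p <= 1.
Proof.
move=> hp; apply: (sum_fam (f := fun p s => active s (relay p) dst)) => // s _ p q.
by case/andP => _ /eqP e1 /andP[_ /eqP e2]; move: e2; rewrite e1 => -[/relay_inj].
Qed.

Lemma le_sum1 (R : realFieldType) N (F : 'I_N -> R) p :
  (forall q, 0 <= F q) -> F p <= \sum_q F q.
Proof. by move=> h; rewrite (bigD1 p) //= lerDl sumr_ge0. Qed.

Lemma hd_ab (R : realFieldType) N (lam : state N -> R) p :
  prob_vector HD lam -> alph HD lam p + bet HD lam p <= 1.
Proof.
move=> hp.
have := sum_fam (f := fun (c : bool) s => if c then active s src (relay p)
                                          else active s (relay p) dst) hp.
rewrite big_bool /=; apply.
move=> s /forallP /(_ (relay p)) /and5P[_ _ _ _]; rewrite is_relay_relay /= => hd.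
case; case=> // ha hb; move: hd; move: ha hb; rewrite /active.
  by case/andP => _ /eqP -> /andP[/eqP -> _].
by case/andP => /eqP -> _ /andP[_ /eqP ->].
Qed.

Lemma Cp_gt0 (R : realFieldType) N m (a b : 'I_N -> R) p :
  0 < a p -> 0 < b p -> 0 < Cp m a b p.
Proof.
move=> ha hb; case: m => /=; first by rewrite lt_min ha hb.
by rewrite divr_gt0 ?mulr_gt0 ?addr_gt0.
Qed.

Lemma lam_to_x (R : realFieldType) N m (a b : 'I_N -> R) (lam : state N -> R) :
  (forall p, 0 < a p) -> (forall p, 0 < b p) -> prob_vector m lam ->
  exists x, lp_feasible m a b x /\ lp_objective m a b x = mc m a b lam.
Proof.
move=> ha hb hp.
pose t p := Num.min (alph m lam p * a p) (bet m lam p * b p).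
have hC p := Cp_gt0 m (ha p) (hb p).
have hCn p : Cp m a b p != 0 by rewrite gt_eqF.
have al0 p := alph_ge0 p hp; have be0 p := bet_ge0 p hp.
have t0 p : 0 <= t p by rewrite le_min !mulr_ge0 // ltW.
have ta p : t p <= alph m lam p * a p by rewrite ge_min lexx.
have tb p : t p <= bet m lam p * b p by rewrite ge_min lexx orbT.
have sa := sum_alph hp; have sb := sum_bet hp.
have al1 p : alph m lam p <= 1 by apply: le_trans (le_sum1 _ _) sa.
have be1 p : bet m lam p <= 1 by apply: le_trans (le_sum1 _ _) sb.
exists (fun p => t p / Cp m a b p); split; last first.
  by apply: eq_bigr => p _; rewrite divfK.
split.
  move=> p; apply/andP; split; first exact: divr_ge0 (t0 p) (ltW (hC p)).
  rewrite ler_pdivrMr // mul1r.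
  have hap := ha p; have hbp := hb p; have tap := ta p; have tbp := tb p.
  have a1 := al1 p; have b1 := be1 p; have a0 := al0 p; have b0 := be0 p.
  case: m hp t tap tbp a1 b1 a0 b0 {hC hCn t0 ta tb sa sb al1 be1 al0 be0} => hp t tap tbp a1 b1 a0 b0 /=.
    rewrite le_min; apply/andP; split.
      by apply: le_trans tap _; rewrite ler_piMl // ltW.
    by apply: le_trans tbp _; rewrite ler_piMl // ltW.
  have hab := hd_ab p hp.
  rewrite ler_pdivlMr ?addr_gt0 //.
  have hab2 : 0 < a p * b p by rewrite mulr_gt0.
  move: (alph HD lam p) (bet HD lam p) (a p) (b p) (t p) tap tbp hab hab2 hap hbp.
  move=> x y u v w h1 h2 h3 h4 h5 h6; nra.
split.
  apply: le_trans sa; apply: ler_sum => p _.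
  by rewrite mulrA divfK // ler_pdivrMr.
apply: le_trans sb; apply: ler_sum => p _.
by rewrite mulrA divfK // ler_pdivrMr.
Qed.

Definition st N (P Q : option 'I_N) : state N :=
  [ffun i => ((if i == src then omap relay P
               else if Q is Some q then (if i == relay q then Some dst else None) else None),
              (if i == dst then omap relay Q
               else if P is Some p then (if i == relay p then Some src else None) else None))].

Lemma st_alph N (P Q : option 'I_N) p : active (st P Q) src (relay p) = (P == Some p).
Proof.
rewrite /active !ffunE /= relay_dst.
case: P => [p'|] //=; rewrite !relay_eq.
by case: (eqVneq p p') => [->|ne]; rewrite ?eqxx // andbF; apply/esym/eqP => -[e]; rewrite e eqxx in ne.
Qed.

Lemma st_bet N (P Q : option 'I_N) p : active (st P Q) (relay p) dst = (Q == Some p).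
Proof.
rewrite /active !ffunE /= relay_src.
case: Q => [q'|] //=; rewrite !relay_eq.
by case: (eqVneq p q') => [->|ne]; rewrite ?eqxx //=; apply/esym/eqP => -[e]; rewrite e eqxx in ne.
Qed.

Lemma src_relay N (p : 'I_N) : (src == relay p) = false.
Proof. by rewrite eq_sym relay_src. Qed.
Lemma dst_relay N (p : 'I_N) : (dst == relay p) = false.
Proof. by rewrite eq_sym relay_dst. Qed.

Lemma st_valid_gen N m (P Q : option 'I_N) :
  (mode_eqb m HD -> ~~ ((P != None) && (P == Q))) -> valid_state m (st P Q).
Proof.
move=> hm; apply/forallP => i; rewrite !ffunE /=.
have [->|nis] := eqVneq i src.
  rewrite src_dst /=; case: P hm => [p|] hm /=; rewrite ?eqxx ?andbT ?src_relay ?relay_src ?implybT //=.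
have [->|nid] := eqVneq i dst.
  case: Q hm => [q|] hm /=; rewrite ?eqxx ?andbT ?dst_relay ?relay_dst ?implybT ?implybF //=.
rewrite /=.
case: Q hm => [q|] hm; case: P hm => [p|] hm /=.
  all: try (have [eq|nq] := eqVneq i (relay q)); try (have [ep|np] := eqVneq i (relay p));
  rewrite /= ?eq ?ep ?dst_src ?src_dst ?dst_relay ?src_relay ?implybT ?andbF ?andbT //.
have epq : p = q by apply: relay_inj; rewrite -ep eq.
by case: m hm => //= hm; move: (hm erefl); rewrite epq eqxx.
Qed.

Lemma st_valid N m (P Q : option 'I_N) :
  ~~ valid_state m (st P Q) -> m = HD /\ exists p, P = Some p /\ Q = Some p.
Proof.
move=> nv; case: m nv => nv.
  by exfalso; move/negP: nv; apply; apply: st_valid_gen.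
split=> //; case: P nv => [p|] nv; last by move/negP: nv; case; apply: st_valid_gen.
case: Q nv => [q|] nv; last by move/negP: nv; case; apply: st_valid_gen.
case: (eqVneq p q) => [<-|ne]; first by exists p.
by move/negP: nv; case; apply: st_valid_gen => _; apply/negP => /andP[_ /eqP e]; move: ne; case: e => ->; rewrite eqxx.
Qed.

Lemma sum_indB (R : ringType) (T : finType) (B : pred T) (x : T) :
  \sum_(s | B s) (s == x)%:R = (B x)%:R :> R.
Proof.
case Bx: (B x).
  by rewrite (bigD1 x) //= eqxx big1 ?addr0 // => i /andP[_ /negbTE->].
by rewrite big1 // => i Bi; case: eqP => // e; move: Bi; rewrite e Bx.
Qed.

Definition lamM (R : realFieldType) N (M : option 'I_N -> option 'I_N -> R) : state N -> R :=
  fun s => \sum_P \sum_Q M P Q * (s == st P Q)%:R.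

Lemma sum_lamM (R : realFieldType) N (M : option 'I_N -> option 'I_N -> R) (B : pred (state N)) :
  \sum_(s | B s) lamM M s = \sum_P \sum_Q M P Q * (B (st P Q))%:R.
Proof.
rewrite exchange_big; apply: eq_bigr => P _; rewrite exchange_big; apply: eq_bigr => Q _.
by rewrite -mulr_sumr sum_indB.
Qed.

Lemma lamM_props (R : realFieldType) N m (M : option 'I_N -> option 'I_N -> R) :
  (forall P Q, 0 <= M P Q) -> (m = HD -> forall p, M (Some p) (Some p) = 0) ->
  \sum_P \sum_Q M P Q = 1 ->
  [/\ prob_vector m (lamM M),
      forall p, alph m (lamM M) p = \sum_Q M (Some p) Q &
      forall p, bet m (lamM M) p = \sum_P M P (Some p)].
Proof.
move=> M0 Md M1.
have hz P Q (c : bool) : M P Q * (valid_state m (st P Q) && c)%:R = M P Q * c%:R.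
  case vs: (valid_state m (st P Q)) => //.
  have [mH [p [eP eQ]]] := st_valid (negbT vs).
  by rewrite eP eQ Md // !mul0r.
split.
- split.
    move=> s _; apply: sumr_ge0 => P _; apply: sumr_ge0 => Q _.
    by rewrite mulr_ge0.
  rewrite sum_lamM -[RHS]M1; apply: eq_bigr => P _; apply: eq_bigr => Q _.
  by have := hz P Q true; rewrite andbT => ->; rewrite mulr1.
- move=> p; rewrite /alph sum_lamM.
  under eq_bigr do under eq_bigr do rewrite hz st_alph.
  rewrite -(sum_ind1 (Some p) (fun P => \sum_Q M P Q)); apply: eq_bigr => P _.
  by rewrite mulr_sumr; apply: eq_bigr => Q _; rewrite mulrC.
- move=> p; rewrite /bet sum_lamM.
  under eq_bigr do under eq_bigr do rewrite hz st_bet.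
  by apply: eq_bigr => P _; rewrite -(sum_ind1 (Some p) (fun Q => M P Q)); apply: eq_bigr => Q _; rewrite mulrC.
Qed.

Lemma choose_xy (R : realFieldType) (al be A B : R) :
  0 <= al -> 0 <= be -> 0 <= A -> 0 <= B -> A + al <= 1 -> B + be <= 1 -> al + be <= 1 ->
  exists x0 y0, [/\ 0 <= x0 <= al, 0 <= y0 <= be,
    al - x0 <= 1 - Num.max 0 (1 - A - B) - A, be - y0 <= 1 - Num.max 0 (1 - A - B) - B &
    Num.max 0 (1 - A - B) - x0 - y0 = Num.max 0 (1 - (A + al) - (B + be))].
Proof.
move=> a0 b0 A0 B0 h1 h2 h3.
case: (lerP (1 - A - B) 0) => hD.
  rewrite max_l; last by lra.
  by exists 0, 0; split; rewrite ?lexx ?a0 ?b0 //; lra.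
case: (lerP (1 - A - B) (al + be)) => hE.
  rewrite max_l; last by lra.
  case: (lerP (al - B) (1 - A - B - be)) => h4.
    case: (lerP 0 (1 - A - B - be)) => h5.
      by exists (1 - A - B - be), be; split; try (apply/andP; split); lra.
    by exists 0, (1 - A - B); split; try (apply/andP; split); lra.
  case: (lerP 0 (al - B)) => h5.
    by exists (al - B), (1 - A - al); split; try (apply/andP; split); lra.
  by exists 0, (1 - A - B); split; try (apply/andP; split); lra.
rewrite max_r; last by lra.
by exists al, be; split; try (apply/andP; split); lra.
Qed.

Lemma frac (R : realFieldType) (u r : R) : 0 <= u -> u <= r ->
  0 <= u / r <= 1 /\ u / r * r = u.
Proof.
move=> u0 ur; case: (eqVneq r 0) => [r0|rn].
  have -> : u = 0 by apply/eqP; rewrite eq_le u0 andbT -r0.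
  by rewrite r0 mul0r mulr0 lexx ler01.
have rp : 0 < r by rewrite lt_def rn (le_trans u0 ur).
split; last by rewrite divfK.
apply/andP; split; first exact: divr_ge0 u0 (ltW rp).
by rewrite ler_pdivrMr // mul1r.
Qed.

Definition trM (R : realFieldType) N (M : option 'I_N -> option 'I_N -> R) :=
  fun P Q => M Q P.

Definition step (R : realFieldType) N (M : option 'I_N -> option 'I_N -> R)
   (x0 y0 f g : R) (k : 'I_N) (P Q : option 'I_N) : R :=
  match P, Q with
  | None, None => M None None - x0 - y0
  | Some p, None => if p == k then x0 else M (Some p) None * (1 - g)
  | None, Some q => if q == k then y0 else M None (Some q) * (1 - f)
  | Some p, Some q => if p == k then (if q == k then 0 else M None (Some q) * f)
                      else if q == k then M (Some p) None * g else M (Some p) (Some q)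
  end.

Lemma step_tr (R : realFieldType) N (M : option 'I_N -> option 'I_N -> R) x0 y0 f g k P Q :
  step M x0 y0 f g k Q P = step (trM M) y0 x0 g f k P Q.
Proof.
case: P => [p|]; case: Q => [q|] //=; rewrite /trM.
- by case: (q == k); case: (p == k).
- by rewrite -!addrA [- _ + _]addrC.
Qed.

Lemma row_other (R : realFieldType) N (M : option 'I_N -> option 'I_N -> R) x0 y0 f g k p :
  p != k -> M (Some p) (Some k) = 0 ->
  \sum_Q step M x0 y0 f g k (Some p) Q = \sum_Q M (Some p) Q.
Proof.
move=> pk h; rewrite !sum_opt /= (negbTE pk).
rewrite (bigD1 k) //= eqxx [in RHS](bigD1 k) //= h add0r addrA -mulrDr.
rewrite subrK mulr1; congr (_ + _); apply: eq_bigr => q /negbTE -> //.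
Qed.

Lemma row_k (R : realFieldType) N (M : option 'I_N -> option 'I_N -> R) x0 y0 f g k :
  M None (Some k) = 0 ->
  \sum_Q step M x0 y0 f g k (Some k) Q = x0 + f * \sum_q M None (Some q).
Proof.
move=> h; rewrite sum_opt /= eqxx; congr (_ + _).
rewrite (bigD1 k) //= eqxx add0r [in RHS](bigD1 k) //= h add0r mulr_sumr.
by apply: eq_bigr => q /negbTE ->; rewrite mulrC.
Qed.

Lemma row_none (R : realFieldType) N (M : option 'I_N -> option 'I_N -> R) x0 y0 f g k :
  M None (Some k) = 0 ->
  \sum_Q step M x0 y0 f g k None Q = M None None - x0 + (1 - f) * \sum_q M None (Some q).
Proof.
move=> h; rewrite sum_opt /=.
rewrite (bigD1 k) //= eqxx [in RHS](bigD1 k) //= h add0r mulr_sumr.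
have -> : \sum_(i < N | i != k) step M x0 y0 f g k None (Some i) =
          \sum_(i < N | i != k) (1 - f) * M None (Some i).
  by apply: eq_bigr => q /negbTE /= ->; rewrite mulrC.
by ring.
Qed.

Lemma step_total (R : realFieldType) N (M : option 'I_N -> option 'I_N -> R) x0 y0 f g k :
  (forall Q, M (Some k) Q = 0) -> (forall P, M P (Some k) = 0) ->
  \sum_P \sum_Q step M x0 y0 f g k P Q = \sum_P \sum_Q M P Q.
Proof.
move=> hr hc.
have e1 : \sum_p \sum_Q step M x0 y0 f g k (Some p) Q =
    x0 + f * \sum_q M None (Some q) + \sum_(p | p != k) \sum_Q M (Some p) Q.
  rewrite (bigD1 k) // row_k ?hc //; congr (_ + _); apply: eq_bigr => p pk.
  by rewrite row_other ?hc.
have e2 : \sum_p \sum_Q M (Some p) Q = \sum_(p | p != k) \sum_Q M (Some p) Q.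
  rewrite (bigD1 k) //=.
  have -> : \sum_Q M (Some k) Q = 0 by rewrite big1.
  by rewrite add0r.

rewrite [LHS]sum_opt [RHS]sum_opt row_none ?hc // e1 e2 (sum_opt (fun Q => M None Q)); ring.
Qed.

Definition Apart (R : realFieldType) N (al : 'I_N -> R) n := \sum_(p < N | (p < n)%N) al p.

Lemma Apart_succ (R : realFieldType) N (al : 'I_N -> R) n (k : 'I_N) :
  val k = n -> Apart al n.+1 = Apart al n + al k.
Proof.
move=> hk; rewrite /Apart (bigD1 k) /=; last by rewrite hk.
rewrite addrC; congr (_ + _); apply: eq_bigl => p.
rewrite ltnS leq_eqVlt -hk; case: (eqVneq p k) => [->|pk]; rewrite ?ltnn ?andbF //= andbT.
by rewrite -[val p == val k]/(p == k) (negbTE pk).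
Qed.

Lemma Apart_ge0 (R : realFieldType) N (al : 'I_N -> R) n :
  (forall p, 0 <= al p) -> 0 <= Apart al n.
Proof. by move=> h; apply: sumr_ge0. Qed.

Lemma Apart_le (R : realFieldType) N (al : 'I_N -> R) n :
  (forall p, 0 <= al p) -> Apart al n <= \sum_p al p.
Proof.
move=> h; rewrite /Apart big_mkcond /=; apply: ler_sum => p _.
by case: ifP.
Qed.

Lemma Apart_N (R : realFieldType) N (al : 'I_N -> R) : Apart al N = \sum_p al p.
Proof. by apply: eq_bigl => p; rewrite ltn_ord. Qed.

Lemma Apart_0 (R : realFieldType) N (al : 'I_N -> R) : Apart al 0 = 0.
Proof. by rewrite /Apart big_pred0. Qed.

Definition Inv (R : realFieldType) N (al be : 'I_N -> R) n (M : option 'I_N -> option 'I_N -> R) :=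
  (forall P Q, 0 <= M P Q) /\ (forall p, M (Some p) (Some p) = 0) /\
  (\sum_P \sum_Q M P Q = 1) /\
  (forall p, \sum_Q M (Some p) Q = if (p < n)%N then al p else 0) /\
  (forall q, \sum_P M P (Some q) = if (q < n)%N then be q else 0) /\
  M None None = Num.max 0 (1 - Apart al n - Apart be n).

Lemma inv_all (R : realFieldType) N (al be : 'I_N -> R) :
  (forall p, 0 <= al p) -> (forall p, 0 <= be p) -> \sum_p al p <= 1 -> \sum_p be p <= 1 ->
  (forall p, al p + be p <= 1) ->
  forall n, (n <= N)%N -> exists M, Inv al be n M.
Proof.
move=> a0 b0 sa sb ab; elim=> [|n IH] hn.
  exists (fun P Q => if (P == None) && (Q == None) then 1 else 0).
  split; first by move=> P0 Q0; case: (_ && _); rewrite ?ler01 ?lexx.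
  split; first by move=> p.
  split.
    rewrite sum_opt [X in _ + X]big1 ?addr0; last by move=> p _; rewrite big1.
    by rewrite sum_opt [X in _ + X]big1 ?addr0.
  split; first by move=> p; rewrite big1.
  split; first by move=> q; rewrite big1 // => -[].
  by rewrite /= !Apart_0 !subr0 max_r ?ler01.
have [M [M0 [Md [M1 [Mr [Mc Mn]]]]]] := IH (ltnW hn).
pose k : 'I_N := Ordinal hn.
have hk : val k = n by [].
have rk Q : M (Some k) Q = 0.
  have : \sum_Q M (Some k) Q = 0 by rewrite Mr hk ltnn.
  move/eqP; rewrite psumr_eq0 // => /allP /(_ Q (mem_index_enum _)) /eqP; exact.
have ck P : M P (Some k) = 0.
  have : \sum_P M P (Some k) = 0 by rewrite Mc hk ltnn.
  move/eqP; rewrite psumr_eq0 // => /allP /(_ P (mem_index_enum _)) /eqP; exact.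
set A := Apart al n; set B := Apart be n.
set r := \sum_q M None (Some q); set c := \sum_p M (Some p) None.
have eA : \sum_p \sum_Q M (Some p) Q = A.
  by rewrite /A /B /Apart [RHS]big_mkcond /=; apply: eq_bigr => p _; rewrite Mr.
have eB : \sum_q \sum_P M P (Some q) = B.
  by rewrite /B /Apart [RHS]big_mkcond /=; apply: eq_bigr => p _; rewrite Mc.
have er : 1 = M None None + r + A.
  by rewrite -M1 sum_opt sum_opt eA.
have ec : 1 = M None None + c + B.
  by rewrite -M1 exchange_big sum_opt sum_opt eB.
have A0 : 0 <= A by apply: Apart_ge0.
have B0 : 0 <= B by apply: Apart_ge0.
have hA : A + al k <= 1.
  by rewrite /A -Apart_succ //; apply: le_trans (Apart_le _ _) sa.
have hB : B + be k <= 1.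
  by rewrite /B -Apart_succ //; apply: le_trans (Apart_le _ _) sb.
have [x0 [y0 [/andP[x00 x0a] /andP[y00 y0b] hxr hyc hm]]] :=
  choose_xy (a0 k) (b0 k) A0 B0 hA hB (ab k).
rewrite -Mn in hxr hyc hm.
have [/andP[f0 f1] ef] : (0 <= (al k - x0) / r <= 1) /\ (al k - x0) / r * r = al k - x0.
  by apply: frac; lra.
have [/andP[g0 g1] eg] : (0 <= (be k - y0) / c <= 1) /\ (be k - y0) / c * c = be k - y0.
  by apply: frac; lra.
move: f0 f1 ef g0 g1 eg; set f := (al k - x0) / r; set g := (be k - y0) / c.
move=> f0 f1 ef g0 g1 eg.
exists (step M x0 y0 f g k).
have ltk (p : 'I_N) : p != k -> (p < n.+1)%N = (p < n)%N.
  move=> pk; rewrite ltnS leq_eqVlt.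
  have -> : (p == n :> nat) = false.
    apply/negbTE; apply: contra pk => /eqP e; apply/eqP/val_inj; rewrite /= e.
    done.
  done.
split.
  case=> [p|] [q|] /=.
  - by case: (p == k); case: (q == k); rewrite ?lexx //; apply: mulr_ge0.
  - by case: (p == k) => //; apply: mulr_ge0; rewrite ?subr_ge0.
  - by case: (q == k) => //; apply: mulr_ge0; rewrite ?subr_ge0.
  - by rewrite hm le_max lexx.
split; first by move=> p /=; case: (p == k).
split; first by rewrite step_total.
split.
  move=> p; case: (eqVneq p k) => [->|pk].
    by rewrite row_k ?ck // -/r ef hk ltnSn; ring.
  by rewrite row_other ?ck // Mr ltk.
split.
  move=> q; rewrite (eq_bigr (fun P => step (trM M) y0 x0 g f k (Some q) P)); last first.
    by move=> P _; exact: step_tr.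
  case: (eqVneq q k) => [->|qk].
    by rewrite row_k /trM ?rk // -/c eg hk ltnSn; ring.
  by rewrite row_other /trM ?rk // Mc ltk.
by rewrite /= hm (Apart_succ al hk) (Apart_succ be hk).
Qed.

Lemma coupling (R : realFieldType) N m (al be : 'I_N -> R) :
  (forall p, 0 <= al p) -> (forall p, 0 <= be p) -> \sum_p al p <= 1 -> \sum_p be p <= 1 ->
  (m = HD -> forall p, al p + be p <= 1) ->
  exists M : option 'I_N -> option 'I_N -> R,
    [/\ forall P Q, 0 <= M P Q, (m = HD -> forall p, M (Some p) (Some p) = 0),
        \sum_P \sum_Q M P Q = 1, forall p, \sum_Q M (Some p) Q = al p &
        forall q, \sum_P M P (Some q) = be q].
Proof.
move=> a0 b0 sa sb hab; case: m hab => hab.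
  pose al' (P : option 'I_N) := if P is Some p then al p else 1 - \sum_p al p.
  pose be' (P : option 'I_N) := if P is Some p then be p else 1 - \sum_p be p.
  have sa' : \sum_P al' P = 1 by rewrite sum_opt /=; ring.
  have sb' : \sum_P be' P = 1 by rewrite sum_opt /=; ring.
  exists (fun P Q => al' P * be' Q); split.
  - by move=> [p|] [q|]; rewrite /= ?mulr_ge0 ?subr_ge0.
  - by [].
  - by rewrite -(mulr1 1) -{1}sa' mulr_suml; apply: eq_bigr => P _; rewrite -mulr_sumr sb'.
  - by move=> p; rewrite -mulr_sumr sb' mulr1.
  - by move=> q; rewrite -mulr_suml sa' mul1r.
have [M [M0 [Md [M1 [Mr [Mc _]]]]]] := inv_all a0 b0 sa sb (hab erefl) (leqnn N).
exists M; split => //.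
- by move=> p; rewrite Mr ltn_ord.
- by move=> q; rewrite Mc ltn_ord.
Qed.

Theorem lemma4 (R : realFieldType) (N : nat) (m : mode) (a b : 'I_N -> rat)
    (ha : forall p, 0 < a p) (hb : forall p, 0 < b p) :
  exists v : R,
    is_C_cs_iid m (fun p => ratr (a p)) (fun p => ratr (b p)) v /\
    is_P1d_opt m (fun p => ratr (a p)) (fun p => ratr (b p)) v.
Proof.
set a' : 'I_N -> R := fun p => ratr (a p).
set b' : 'I_N -> R := fun p => ratr (b p).
have ha' p : 0 < a' p by rewrite /a' ltr0q.
have hb' p : 0 < b' p by rewrite /b' ltr0q.
have hC p := Cp_gt0 m (ha' p) (hb' p).
have [v [[xs [fxs oxs]] vmax]] :=
  lp_max (fun p => Cp m a' b' p / a' p) (fun p => Cp m a' b' p / b' p)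
         (fun p => ltW (hC p)).
exists v; split; last by split; [exists xs | ].
split; last first.
  move=> lam w hp hw.
  apply: le_trans (proj2 (mincut_char m a' b' lam) _ hw) _.
  have [x [fx <-]] := lam_to_x ha' hb' hp.
  exact: vmax.
case: fxs => hx [sa sb].
pose al p := xs p * (Cp m a' b' p / a' p).
pose be p := xs p * (Cp m a' b' p / b' p).
have al0 p : 0 <= al p.
  by case/andP: (hx p) => h0 _; rewrite mulr_ge0 // divr_ge0 // ltW.
have be0 p : 0 <= be p.
  by case/andP: (hx p) => h0 _; rewrite mulr_ge0 // divr_ge0 // ltW.
have hab : m = HD -> forall p, al p + be p <= 1.
  move=> mH p; case/andP: (hx p) => _ h1.
  have -> : al p + be p = xs p.
    rewrite /al /be mH /=; have := ha' p; have := hb' p => h1' h2'.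
    field; rewrite ?gt_eqF ?addr_gt0 //.
  done.
have [M [M0 Md M1 Mr Mc]] := coupling al0 be0 sa sb hab.
have [hp halph hbet] := lamM_props M0 Md M1.
exists (lamM M); split => //.
have := proj1 (mincut_char m a' b' (lamM M)).
suff -> : mc m a' b' (lamM M) = v by [].
rewrite -oxs /mc /objG; apply: eq_bigr => p _.
have e (x y z : R) : z != 0 -> x * (y / z) * z = x * y.
  by move=> hz; rewrite -mulrA divfK.
rewrite halph hbet Mr Mc /al /be (e _ _ _ (lt0r_neq0 (ha' p))) (e _ _ _ (lt0r_neq0 (hb' p))).
exact: minxx.
Qed.
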